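(* Let $G$ be a graph and let $\{A,B\}$ be a near partition of $V(G)$ (i.e. $A\cap B=\emptyset$, $A\cup B=V(G)$, with $A$ or $B$ possibly empty). Then $$\mathrm{cmp}(G)\le \max\{\mathrm{cmp}(G[A]),\mathrm{cmp}(G[B])\}+|N_G(B)|.$$
   Context: All graphs are finite and simple. $G[X]$ is the induced subgraph on $X$, and $N_G(X)$ is the set of vertices outside $X$ having a neighbor in $X$. A forest decomposition of a graph $G$ is a pair $(F,(W_x)_{x\in V(F)})$ where $F$ is a forest and $W_x\subseteq V(G)$, such that (1) for every vertex $u$ of $G$, $\{x\in V(F)\mid u\in W_x\}$ induces a nonempty connected subgraph of $F$, and (2) every edge $uv$ of $G$ has both ends in some bag $W_x$. Its width is the maximum size of a bag minus one. It is suitable if additionally (3) $F$ is a subgraph of $G$ with $V(F)=V(G)$, and (4) $u\in W_u$ for every $u\in V(G)$. Every graph has a suitable forest decomposition. The complexity $\mathrm{cmp}(G)$ is the minimum width of a suitable forest decomposition of $G$, with the convention $\mathrm{cmp}(G)=0$ if $G$ has no vertices. *)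

(* Defs.v *)
(* graphs are symmetric irreflexive relations on a finType. *)
From mathcomp Require Import all_boot all_order.
From mathcomp Require Import boolp.
Set Implicit Arguments. Unset Strict Implicit. Unset Printing Implicit Defensive.

Section Graphs.
Variable T : finType.

Definition sub_rel (r : rel T) (V : {set T}) : rel T :=
  [rel x y | [&& x \in V, y \in V & r x y]].

Definition is_forest (f : rel T) : Prop :=
  ~ exists s : seq T, [&& uniq s, 2 < size s & cycle f s].

(* The forest F has
   vertex set V and edge relation f; the bag of node x is W x. *)
Definition suitable_fd (e : rel T) (V : {set T}) (f : rel T)
    (W : T -> {set T}) : Prop :=
  symmetric f /\ irreflexive f /\
      (forall x y, f x y -> [&& x \in V, y \in V & e x y]) /\
      is_forest f /\
      (forall x, x \in V -> W x \subset V) /\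
      (forall u, u \in V ->
         ([set x in V | u \in W x] != set0 /\
         (forall x y, x \in [set x in V | u \in W x] -> y \in [set x in V | u \in W x] ->
            connect (sub_rel f [set x in V | u \in W x]) x y))) /\
      (forall u v, u \in V -> v \in V -> e u v ->
         exists2 x, x \in V & (u \in W x) && (v \in W x)) /\
      (forall u, u \in V -> u \in W u).

(* width = max bag size minus one (0 for the empty graph) *)
Definition fd_width (V : {set T}) (W : T -> {set T}) : nat :=
  (\max_(x in V) #|W x|).-1.

Definition has_sfd (e : rel T) (V : {set T}) (k : nat) : Prop :=
  exists f W, suitable_fd e V f W /\ fd_width V W <= k.

Lemma has_sfd_bool (e : rel T) (V : {set T}) :
  (exists k, has_sfd e V k) -> exists k, `[< has_sfd e V k >].
Proof. by case=> k hk; exists k; apply/asboolP. Qed.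

(* cmp(G[V]) : minimum width of a suitable forest decomposition.
   (Such a decomposition always exists; the fallback 0 is never used.) *)
Definition cmp (e : rel T) (V : {set T}) : nat :=
  match pselect (exists k, has_sfd e V k) with
  | left h => ex_minn (has_sfd_bool h)
  | right _ => 0
  end.

Definition nbhd (e : rel T) (B : {set T}) : {set T} :=
  [set v | (v \notin B) && [exists u in B, e u v]].

End Graphs.

(* Main.v *)
Require Import Defs.
From mathcomp Require Import all_boot.
From mathcomp Require Import boolp.
From mathcomp Require Import zify.
Set Implicit Arguments. Unset Strict Implicit. Unset Printing Implicit Defensive.

Section Aux.
Variable T : finType.

Lemma connect_closedS (F : rel T) (S : {set T}) x y :
  x \in S -> (forall a b, a \in S -> F a b -> b \in S) ->
  connect F x y -> connect (sub_rel F S) x y.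
Proof.
move=> xS cl /connectP [p pp ->]; apply/connectP; exists p => //.
elim: p x xS pp => //= b p IH a aS /andP [fab pp].
have bS := cl _ _ aS fab.
by rewrite /sub_rel /= aS bS fab /= IH.
Qed.

Definition E2 (x y : T) : rel T :=
  fun a b => ((a == x) && (b == y)) || ((a == y) && (b == x)).

Lemma decomp (F : rel T) x y q a :
  path (fun u v => F u v || E2 x y u v) a q ->
  path F a q \/ exists p1 z p2, [/\ q = p1 ++ z :: p2, path F a p1,
      E2 x y (last a p1) z & path (fun u v => F u v || E2 x y u v) z p2].
Proof.
elim: q a => [|b q IH] a /=; first by left.
case/andP => /orP [fab|Eab] pp.
  case: (IH b pp) => [pb|[p1 [z [p2 [-> h1 h2 h3]]]]].
    by left; rewrite fab pb.
  by right; exists (b :: p1), z, p2; split => //=; rewrite fab.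
by right; exists [::], b, q; split.
Qed.

Lemma add_edge_forest (F : rel T) x y :
  symmetric F -> is_forest F -> ~~ connect F x y -> x != y ->
  is_forest (fun u v => F u v || E2 x y u v).
Proof.
move=> sF fF nc nxy [s /and3P [us ss cs]].
case: s us ss cs => [//|a s'] us ss /=.
rewrite -cats1 cats1 => cs.
case: (decomp cs) => [pF|[p1 [z [p2 [eq h1 h2 h3]]]]].
  by apply: fF; exists (a :: s'); rewrite us ss /= -cats1 cats1 pF.
set y0 := last a p1.
have la : last z p2 = a.
  by have := last_rcons a s' a; rewrite eq last_cat.
have pq : path (fun u v => F u v || E2 x y u v) z (p2 ++ p1).
  rewrite cat_path h3 la.
  by apply: sub_path h1 => u v ->.
have lq : last z (p2 ++ p1) = y0 by rewrite last_cat la.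
have uq : uniq (z :: p2 ++ p1).
  have : perm_eq (z :: p2 ++ p1) (a :: s').
    by rewrite -cat_cons perm_catC -eq perm_rcons.
  move/perm_uniq => ->; exact: us.
have szq : 2 <= size (p2 ++ p1).
  have : size (rcons s' a) = size (p1 ++ z :: p2) by rewrite eq.
  by rewrite size_rcons size_cat /= size_cat; move: ss => /=; lia.
have E2sym : forall u v, E2 x y u v = E2 x y v u.
  by move=> u v; rewrite /E2 orbC; congr orb; rewrite andbC.
have E2fun : forall u v w, E2 x y u v -> E2 x y u w -> v = w.
  by move=> u v w; rewrite /E2 => /orP [/andP [/eqP -> /eqP ->]|/andP [/eqP -> /eqP ->]]
      /orP [/andP [/eqP h /eqP ->]|/andP [/eqP h /eqP ->]] //; move: nxy; rewrite h eqxx.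
case: (p2 ++ p1) pq lq uq szq => [//|q1 rest] /= /andP [fzq prest] lq.
case/andP => /norP [zq1 zrest] /andP [q1rest urest] szq.
have fzq1 : F z q1.
  case/orP: fzq => // Ezq.
  have Ezy : E2 x y z y0 by rewrite E2sym.
  have := E2fun _ _ _ Ezq Ezy => eqq.
  case: rest prest lq q1rest urest zrest szq => [//|r rr] _ lq q1rest _ _ _.
  move: (mem_last r rr); rewrite /= in lq; rewrite lq -eqq => h.
  by move: q1rest; rewrite h.
have prF : path F q1 rest.
  apply: (@sub_in_path _ [pred w | w != z]) prest; last first.
    by rewrite /= eq_sym zq1 /=; apply/allP => w wr /=; apply: contraNneq zrest => <-.
  move=> u v /= uz vz /orP [//|Euv].
  exfalso.
  move: h2; rewrite -/y0 /E2.
  move: Euv; rewrite /E2.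
  rewrite !inE in uz vz.
  by case/orP => /andP [/eqP eu /eqP ev]; case/orP => /andP [_ /eqP ez];
    subst; rewrite ?eqxx in uz vz.
have : connect F z y0.
  apply/connectP; exists (q1 :: rest); first by rewrite /= fzq1.
  by rewrite -lq.
move: h2 nc; rewrite -/y0 /E2 => /orP [/andP [/eqP -> /eqP ->]|/andP [/eqP -> /eqP ->]].
  by move=> nc c; move: nc; rewrite (sym_connect_sym sF) c.
by move=> nc c; move: nc; rewrite c.
Qed.

End Aux.

Section Aux2.
Variable T : finType.

Definition ncset (F : rel T) : {set T * T} := [set p | ~~ connect F p.1 p.2].

Lemma extend (e F0 : rel T) : symmetric e -> symmetric F0 -> irreflexive F0 ->
  subrel F0 e -> is_forest F0 ->
  exists F : rel T, [/\ symmetric F, irreflexive F, subrel F e, is_forest F &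
     subrel F0 F /\ forall x y, e x y -> connect F x y].
Proof.
move=> se sF0 iF0 sub0 fF0.
suff H : forall n (F : rel T), #|ncset F| < n -> symmetric F -> irreflexive F ->
  subrel F e -> is_forest F -> subrel F0 F ->
  exists F : rel T, [/\ symmetric F, irreflexive F, subrel F e, is_forest F &
     subrel F0 F /\ forall x y, e x y -> connect F x y].
  by apply: (H #|ncset F0|.+1).
elim => [//|n IH] F cF sF iF subF fF sub0F.
case: (pickP [pred p : T * T | e p.1 p.2 && ~~ connect F p.1 p.2]) => [[x y] /andP [/= exy nc]|none]; last first.
  exists F; split => //; split => // x y exy; have := none (x, y); rewrite /= exy /=.
  by move/negbFE.
have nxy : x != y by apply: contraNneq nc => ->; exact: connect0.
pose F' := fun u v => F u v || E2 x y u v.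
apply: (IH F').
- have : ncset F' \proper ncset F.
    apply/properP; split.
      apply/subsetP => [[a b]]; rewrite !inE /=; apply: contra.
      apply: connect_sub => u v fuv; apply: connect1; by rewrite /F' fuv.
    exists (x, y); first by rewrite inE.
    by rewrite inE /= negbK; apply: connect1; rewrite /F' /E2 !eqxx /= orbT.
  move/proper_card; lia.
- move=> u v; rewrite /F' sF /E2; congr orb; rewrite orbC; congr orb; rewrite andbC //.
- move=> u; rewrite /F' iF /E2 /=; apply/negP => /orP [] /andP [/eqP -> /eqP h];
    by move: nxy; rewrite h eqxx.
- move=> u v; rewrite /F' => /orP [/subF //|].
  by rewrite /E2 => /orP [] /andP [/eqP -> /eqP ->] //; rewrite se.
- exact: add_edge_forest.
- by move=> u v /sub0F; rewrite /F' => ->.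
Qed.

End Aux2.

Section Aux3.
Variable T : finType.

Lemma sfd_exists (e : rel T) (V : {set T}) : symmetric e -> has_sfd e V #|T|.
Proof.
move=> se.
have ses : symmetric (sub_rel e V).
  by move=> u v; rewrite /sub_rel /= se andbCA.
have f0 : is_forest (fun _ _ : T => false).
  by move=> [[|a [|b s]]] //=; rewrite !andbF.
have s0 : subrel (fun _ _ : T => false) (sub_rel e V) by [].
have [F [sF iF subF fF [_ cF]]] :=
  @extend _ (sub_rel e V) (fun _ _ => false) ses (fun _ _ => erefl) (fun _ => erefl) s0 f0.
have cs := sym_connect_sym sF.
pose W := fun x => [set y in V | connect F x y].
exists F, W; split; last first.
  rewrite /fd_width; have : \max_(x in V) #|W x| <= #|T|.
    by apply/bigmax_leqP => x _; exact: max_card.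
  lia.
split => //; split => //; split; first by move=> x y /subF.
split => //; split; first by move=> x _; apply/subsetP => y; rewrite inE => /andP [].
split.
  move=> u uV; split.
    by apply/set0Pn; exists u; rewrite !inE uV /= connect0.
  move=> x y; rewrite !inE uV /= => /andP [xV xu] /andP [yV yu].
  apply: (@connect_closedS _ F [set x0 in V | u \in W x0]); first by rewrite !inE xV uV.
    move=> a b; rewrite !inE uV /= => /andP [aV au] fab.
    have := subF _ _ fab; rewrite /sub_rel /= => /and3P [_ bV _].
    rewrite bV /=; apply: connect_trans au; apply: connect1; by rewrite sF.
  by apply: connect_trans xu _; rewrite cs.
split.
  move=> u v uV vV euv; exists u => //; rewrite !inE uV vV connect0 /=.
  by apply: cF; rewrite /sub_rel /= uV vV.
by move=> u uV; rewrite inE uV connect0.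
Qed.

Lemma cmp_spec (e : rel T) (V : {set T}) : symmetric e -> has_sfd e V (cmp e V).
Proof.
move=> se; rewrite /cmp; case: pselect => [h|h]; last first.
  by exfalso; apply: h; exists #|T|; exact: sfd_exists.
by case: ex_minnP => m /asboolP.
Qed.

Lemma cmp_min (e : rel T) (V : {set T}) k : has_sfd e V k -> cmp e V <= k.
Proof.
move=> hk; rewrite /cmp; case: pselect => [h|h]; last by exfalso; apply: h; exists k.
case: ex_minnP => m _ mm; apply: mm; exact/asboolP.
Qed.

End Aux3.

Lemma path_side (T : finType) (P : pred T) (e1 e2 : rel T) :
  (forall a b, P a -> e1 a b -> e2 a b && P b) ->
  forall p a, P a -> path e1 a p -> path e2 a p.
Proof.
move=> h; elim => [//|b p IH] a Pa /= /andP [eab pp].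
by case/andP: (h _ _ Pa eab) => -> Pb /=; apply: IH.
Qed.

Unset Implicit Arguments.
Theorem lemma3p2 (T : finType) (e : rel T) (A B : {set T}) :
  symmetric e -> irreflexive e ->
  A :&: B = set0 -> A :|: B = [set: T] ->
  cmp e [set: T] <= maxn (cmp e A) (cmp e B) + #|nbhd e B|.
Proof.
move=> se ie AB AUB.
have inB : forall x, (x \in B) = (x \notin A).
  move=> x; have := in_setT x; rewrite -AUB inE.
  have : x \in A :&: B = false by rewrite AB inE.
  by rewrite inE; case: (x \in A); case: (x \in B).
have [fA [WA [[sA [iA [subA [forA [bagA [conA [edA vA]]]]]]] wA]]] := cmp_spec A se.
have [fB [WB [[sB [iB [subB [forB [bagB [conB [edB vB]]]]]]] wB]]] := cmp_spec B se.
set a := cmp e A in wA *; set b := cmp e B in wB *.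
set N := nbhd e B.
pose F0 := fun x y => fA x y || fB x y.
have sF0 : symmetric F0 by move=> x y; rewrite /F0 sA sB.
have iF0 : irreflexive F0 by move=> x; rewrite /F0 iA iB.
have subF0 : subrel F0 e.
  by move=> x y /orP [/subA|/subB] /and3P [].
have fF0 : is_forest F0.
  move=> [[|c s'] /and3P [us ss cs]] //.
  case cA : (c \in A).
    apply: forA; exists (c :: s'); rewrite us ss /=.
    apply: (@path_side _ (fun x => x \in A) F0) cs => //.
    move=> x y xA /orP [fxy|fxy].
      by rewrite fxy; case/and3P: (subA _ _ fxy).
    by case/and3P: (subB _ _ fxy); rewrite inB xA.
  apply: forB; exists (c :: s'); rewrite us ss /=.
  apply: (@path_side _ (fun x => x \in B) F0) cs; last by rewrite inB cA.
  move=> x y xB /orP [fxy|fxy].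
    by rewrite inB in xB; case/and3P: (subA _ _ fxy) => xA; rewrite xA in xB.
  by rewrite fxy; case/and3P: (subB _ _ fxy).
have [F [sF iF subF fF [sub0F cF]]] := extend se sF0 iF0 subF0 fF0.
have cs := sym_connect_sym sF.
pose W := fun x => (if x \in A then WA x else WB x) :|: (N :&: [set y | connect F x y]).
apply: cmp_min; exists F, W; split; last first.
  rewrite /fd_width.
  suff : \max_(x in [set: T]) #|W x| <= (maxn a b + #|N|).+1 by lia.
  apply/bigmax_leqP => x _.
  have h1 : #|W x| <= #|if x \in A then WA x else WB x| + #|N|.
    rewrite /W cardsU.
    have := subset_leq_card (@subsetIl _ N [set y | connect F x y]).
    lia.
  apply: leq_trans h1 _.
  case: ifP => xA.
    have := @leq_bigmax_cond _ (fun x => x \in A) (fun x => #|WA x|) x xA; rewrite /fd_width in wA; lia.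
  have xB : x \in B by rewrite inB xA.
  have := @leq_bigmax_cond _ (fun x => x \in B) (fun x => #|WB x|) x xB; rewrite /fd_width in wB; lia.
have vW : forall u, u \in W u.
  move=> u; rewrite /W inE; case: ifP => uA; first by rewrite vA.
  by rewrite vB // inB uA.
split => //; split => //; split; first by move=> x y fxy; rewrite !inE subF.
split => //; split; first by move=> x _; apply: subsetT.
split.
  move=> u _; split; first by apply/set0Pn; exists u; rewrite inE in_setT vW.
  move=> x y.
  have memS : forall z, (z \in [set x0 in [set: T] | u \in W x0]) = (u \in W z).
    by move=> z; rewrite inE in_setT.
  rewrite !memS.
  have WE : forall z, (u \in W z) = [|| (z \in A) && (u \in WA z),
      (z \notin A) && (u \in WB z) | (u \in N) && connect F z u].
    by move=> z; rewrite /W !inE; case: (z \in A).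
  case uN : (u \in N).
    have cS : forall z, (u \in W z) = connect F z u.
      move=> z; rewrite WE uN /=; apply/idP/idP; last by move=> ->; rewrite !orbT.
      case/or3P => [/andP [zA uz]|/andP [zA uz]|//].
        have uA : u \in A by move/subsetP: (bagA z zA) => /(_ u uz).
        have [_ cc] := conA u uA.
        have := cc z u; rewrite !inE zA uz uA vA // => /(_ erefl erefl).
        apply: connect_sub => p q /and3P [_ _ fpq]; apply: connect1; apply: sub0F.
        by rewrite /F0 fpq.
      have zB : z \in B by rewrite inB.
      have uB : u \in B by move/subsetP: (bagB z zB) => /(_ u uz).
      have [_ cc] := conB u uB.
      have := cc z u; rewrite !inE zB uz uB vB // => /(_ erefl erefl).
      apply: connect_sub => p q /and3P [_ _ fpq]; apply: connect1; apply: sub0F.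
      by rewrite /F0 fpq orbT.
    move=> xu yu; rewrite cS in xu; rewrite cS in yu.
    apply: connect_closedS; first by rewrite memS cS.
      move=> p q; rewrite !memS !cS => pu fpq; apply: connect_trans _ pu.
      by apply: connect1; rewrite sF.
    by apply: connect_trans xu _; rewrite cs.
  case uA : (u \in A).
    have hS : forall z, u \in W z -> (z \in A) && (u \in WA z).
      move=> z; rewrite WE uN andFb orbF => /orP [//|/andP [zA uz]].
      have zB : z \in B by rewrite inB.
      by move/subsetP: (bagB z zB) => /(_ u uz); rewrite inB uA.
    move=> /hS /andP [xA xu] /hS /andP [yA yu].
    have [_ cc] := conA u uA.
    have := cc x y; rewrite !inE xA xu yA yu => /(_ erefl erefl).
    apply: connect_sub => p q /and3P [pS qS fpq]; apply: connect1.
    rewrite !inE in pS qS; case/andP: pS => pA pu; case/andP: qS => qA qu.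
    by rewrite /sub_rel /= !memS !WE pA pu qA qu /= sub0F // /F0 fpq.
  have uB : u \in B by rewrite inB uA.
  have hS : forall z, u \in W z -> (z \in B) && (u \in WB z).
    move=> z; rewrite WE uN andFb orbF => /orP [/andP [zA uz]|/andP [zA uz]].
      by move/subsetP: (bagA z zA) => /(_ u uz); rewrite uA.
    by rewrite inB zA uz.
  move=> /hS /andP [xB xu] /hS /andP [yB yu].
  have [_ cc] := conB u uB.
  have := cc x y; rewrite !inE xB xu yB yu => /(_ erefl erefl).
  apply: connect_sub => p q /and3P [pS qS fpq]; apply: connect1.
  rewrite !inE in pS qS; case/andP: pS => pB pu; case/andP: qS => qB qu.
  rewrite inB in pB; rewrite inB in qB.
  rewrite /sub_rel /= !memS !WE pB pu qB qu /= ?orbT /=; apply: sub0F; by rewrite /F0 fpq orbT.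
split; last by move=> u _; apply: vW.
move=> u v _ _ euv.
have uNi : forall p q, p \in A -> q \notin A -> e p q -> p \in N.
  move=> p q pA qA epq; rewrite /N /nbhd inE inB pA /=.
  by apply/existsP; exists q; rewrite inB qA /= se.
case uA : (u \in A); case vA' : (v \in A).
- have [x xA /andP [ux vx]] := edA u v uA vA' euv.
  by exists x => //; rewrite /W !inE xA ux vx.
- have uN := uNi u v uA (negbT vA') euv.
  have vB' : v \in B by rewrite inB vA'.
  exists v => //; rewrite /W !in_setU !in_setI vA' uN (vB v vB') /= andbT.
  by apply/orP; right; rewrite in_set; apply: cF; rewrite se.
- have vN := uNi v u vA' (negbT uA) (etrans (se v u) euv).
  have uB' : u \in B by rewrite inB uA.
  exists u => //; rewrite /W !in_setU !in_setI uA vN (vB u uB') /=.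
  by apply/orP; right; rewrite in_set; apply: cF.
- have uB : u \in B by rewrite inB uA.
  have vB' : v \in B by rewrite inB vA'.
  have [x xB /andP [ux vx]] := edB u v uB vB' euv.
  have xA : x \in A = false by apply/negbTE; rewrite -inB.
  by exists x => //; rewrite /W !inE xA ux vx.
Qed.
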